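(* Let $p$ be a prime and let $G$ be a finite group with $G=PN$, where $1<P\in\mathrm{Syl}_p(G)$, $N\trianglelefteq G$, $\gcd(|P|,|N|)=1$ and $C_N(P)=1$. Then $G$ has a redundant Sylow $p$-subgroup if and only if $C_N(x)>1$ for every $p$-element $x\in G$.
   Context: For a finite group $G$ and a prime $p$, $G_p$ denotes the set of $p$-elements of $G$ and $\mathrm{Syl}_p(G)$ the set of Sylow $p$-subgroups of $G$. $G$ is said to have a redundant Sylow $p$-subgroup if $G_p$ is contained in the union of the members of some proper subset of $\mathrm{Syl}_p(G)$. *)

(* Defs.v *)
From mathcomp Require Import all_boot all_fingroup all_solvable.
Set Implicit Arguments. Unset Strict Implicit. Unset Printing Implicit Defensive.
Local Open Scope group_scope.

Definition p_elts (gT : finGroupType) (p : nat) (G : {set gT}) : {set gT} :=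
  [set x in G | p.-elt x].

Definition has_redundant_sylow (gT : finGroupType) (p : nat) (G : {set gT}) : Prop :=
  exists S : {set {group gT}},
    S \proper 'Syl_p(G) /\ p_elts p G \subset \bigcup_(Q in S) Q.

(* Main.v *)
Require Import Defs.
From mathcomp Require Import all_boot all_fingroup all_solvable.
Local Open Scope group_scope.

Lemma keyK (gT : finGroupType) (Q N : {group gT}) y h :
  Q :&: N = 1 -> y \in 'N(N) -> y \in Q -> h \in N -> y ^ h \in Q ->
  [~ y, h] == 1.
Proof.
move=> TI nN yQ hN yhQ.
have : [~ y, h] \in Q :&: N.
  rewrite inE; apply/andP; split.
    by rewrite commgEl groupM ?groupV.
  by rewrite commgEr groupM // memJ_norm // groupV.
by rewrite TI inE.
Qed.

Theorem corollary3p2 (gT : finGroupType) (p : nat) (G P N : {group gT}) :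
  prime p ->
  P \in 'Syl_p(G) -> P :!=: 1 ->
  N <| G -> G :=: P * N ->
  coprime #|P| #|N| ->
  'C_N(P) :=: 1 ->
  has_redundant_sylow p G <-> (forall x, x \in G -> p.-elt x -> 'C_N[x] :!=: 1).
Proof.
move=> pr SylP ntP nsNG defG cop CNP.
have sylP : p.-Sylow(G) P by move: SylP; rewrite inE.
have sPG : P \subset G by case/andP: sylP.
have /andP[sNG nNG] := nsNG.
have TI : P :&: N = 1 by apply: coprime_TIg.
have NG : forall n, n \in N -> n \in G by apply/subsetP.
have nN : forall y, y \in G -> y \in 'N(N) by apply/subsetP.
have TIm : forall m, m \in N -> P :^ m :&: N = 1.
  by move=> m mN; rewrite -{1}(conjGid mN) -conjIg TI conjs1g.
have decomp : forall g, g \in G -> exists2 n, n \in N & P :^ g = P :^ n.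
  move=> g; rewrite defG => /mulsgP[a n aP nN' ->].
  by exists n => //; rewrite conjsgM conjGid.
have sylJ : forall n, n \in G -> (P :^ n)%G \in 'Syl_p(G).
  by move=> n nG; rewrite inE /= pHallJ.
have sylS : forall Q : {group gT}, Q \in 'Syl_p(G) ->
    exists2 n, n \in N & Q :=: P :^ n.
  move=> Q; rewrite inE => sylQ.
  have [g gG ->] := Sylow_trans sylP sylQ.
  exact: decomp.
have cover : forall x, x \in G -> p.-elt x -> exists2 n, n \in N & x \in P :^ n.
  move=> x xG px.
  have xs : <[x]> \subset G by rewrite cycle_subG.
  have [g gG sub] := Sylow_subJ sylP xs px.
  have [n nN' E] := decomp g gG.
  exists n => //; rewrite -E; apply: (subsetP sub); exact: cycle_id.
split.
- case=> S [prS cov] x xG px.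
  have [sS [Q QSyl QS]] := properP prS.
  have [m mN QE] := sylS Q QSyl.
  have [n1 n1N xP] := cover x xG px.
  set g := n1^-1 * m.
  have gN : g \in N by rewrite groupM ?groupV.
  set y := x ^ g.
  have yQ : y \in P :^ m.
    by rewrite /y /g conjgM memJ_conjg -mem_conjg.
  have yG : y \in G by rewrite groupJ // NG.
  have yp : y \in p_elts p G by rewrite inE yG p_eltJ.
  have [R RS yR] := bigcupP (subsetP cov y yp).
  have [r rN RE] := sylS R (subsetP sS R RS).
  set h := r^-1 * m.
  have hN : h \in N by rewrite groupM ?groupV.
  have c : [~ y, h] == 1.
    apply: (@keyK _ (P :^ m)%G N _ _ (TIm m mN)) => //; first by rewrite nN.
    by rewrite /h conjgM memJ_conjg -mem_conjg -RE.
  apply/trivgPn; exists (h ^ g^-1).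
    rewrite inE groupJ ?groupV //=.
    have -> : x = y ^ g^-1 by rewrite /y conjgK.
    by rewrite cent1J memJ_conjg; apply/cent1P; apply/esym/commgP.
  rewrite conjg_eq1; apply: contraNneq QS => h1.
  have rm : r = m by apply/eqP; rewrite -(mulKVg r m) -/h h1 mulg1.
  have -> : Q = R by apply: val_inj; rewrite /= QE RE rm.
  exact: RS.
- move=> Hx; exists ('Syl_p(G) :\ P); split; first exact: properD1.
  apply/subsetP => x; rewrite inE => /andP[xG px].
  have [n nN' xPn] := cover x xG px.
  case: (eqVneq (P :^ n) (P : {set gT})) => [E|ne].
    rewrite E in xPn.
    have [h] := trivgPn _ (Hx x xG px).
    rewrite inE => /andP[hN hC] h1.
    apply/bigcupP; exists (P :^ h)%G.
      rewrite !inE; apply/andP; split; last by rewrite /= pHallJ ?NG.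
      apply: contra h1 => /eqP /(congr1 val) /= PhP.
      have : h \in 'C_N(P).
        rewrite inE hN; apply/centP => z zP; apply/esym/commgP.
        apply: (@keyK _ P N z h TI) => //; first by rewrite nN // (subsetP sPG).
        by rewrite -PhP memJ_conjg.
      by rewrite CNP inE.
    have xh : x ^ h = x by apply/conjg_fixP/commgP/esym/cent1P.
    by rewrite /= -xh memJ_conjg.
  apply/bigcupP; exists (P :^ n)%G => //.
  rewrite !inE; apply/andP; split; last by rewrite /= pHallJ ?NG.
  by apply: contra ne => /eqP /(congr1 val) /= ->.
Qed.
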